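(* Let $\mathcal{M}$ be a class of $\mathcal{L}$-structures and $\Sigma$ a class of formulas of $\mathcal{L}_A$ containing all atomic formulas and closed under subformulas. If $p$ is a condition of the forcing property $\mathcal{P}(\mathcal{M},\Sigma)$ and $\sigma$ is a sentence of $\Sigma(C)$, then $F^w_p(\sigma)=H^w_p(\sigma)$.
   Context: $\mathcal{L}$ is a countable continuous signature; formulas of $\mathcal{L}_{\omega_1,\omega}$ are built from atomic formulas using $\neg$ ($1-x$), $\tfrac12$, $\dotplus$ ($\min(x+y,1)$), countable conjunctions $\bigwedge$ (infimum) and $\inf_x$, with values in $[0,1]$. $\mathcal{L}_A$ is a countable fragment. $C=\{c_i:i<\omega\}$ are new constants. $\mathcal{M}(C)$ is the class of structures $(M,a_c)_{c\in C_0}$ with $M\in\mathcal{M}$, $C_0\subseteq C$ finite. $\Sigma(C)$ is the set of formulas obtained from formulas of $\Sigma$ by replacing finitely many free variables by constants from $C$. The forcing property $\mathcal{P}(\mathcal{M},\Sigma)=(\mathbb{P},\le,f)$: conditions are finite sets $\{\phi_1<r_1,\dots,\phi_n<r_n\}$ with $\phi_i\in\Sigma(C)$ sentences such that some $M\in\mathcal{M}(C)$ has $\phi_i^M<r_i$ for all $i$; $p\le q$ iff $p\supseteq q$; for an atomic sentence $\phi$, $f_p(\phi)=\min\{r\le1:(\phi<r)\in p\}$ if nonempty, else $1$. Forcing values on sentences: $F_p(\varphi)=f_p(\varphi)$ for atomic $\varphi$; $F_p(\neg\varphi)=1-\inf_{q\le p}F_q(\varphi)$; $F_p(\tfrac12\varphi)=\tfrac12F_p(\varphi)$;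 $F_p(\varphi\dotplus\psi)=\min(F_p(\varphi)+F_p(\psi),1)$; $F_p(\bigwedge\Phi)=\inf_{\varphi\in\Phi}F_p(\varphi)$; $F_p(\inf_x\varphi)=\inf_{c\in C}F_p(\varphi(c))$; $F^w_p(\varphi)=\sup_{q\le p}\inf_{q'\le q}F_{q'}(\varphi)$. For a sentence $\varphi\in\Sigma(C)$, $H_p(\varphi)=\min\{r\le1:(\varphi<r)\in p\}$ if nonempty, else $1$; $H^w_p(\varphi)=\sup_{q\le p}\inf_{q'\le q}H_{q'}(\varphi)$. *)

(* Defs.v *)
From Stdlib Require Import Reals Lra List Classical ClassicalEpsilon
  FunctionalExtensionality.
From Stdlib Require Fin.
Import ListNotations.
Open Scope R_scope.

Set Implicit Arguments.

(* Inf E is the greatest lower bound of E when E is nonempty and        *)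
(* bounded below; otherwise 1 (the convention for an empty infimum of   *)
(* [0,1]-values; all sets used below of values in [0,1] that are        *)
(* nonempty are bounded).  Sup E is the least upper bound when E is     *)
(* nonempty and bounded above, otherwise 0.                             *)

Definition Sup (E : R -> Prop) : R :=
  match excluded_middle_informative (bound E /\ exists x, E x) with
  | left h => proj1_sig (completeness E (proj1 h) (proj2 h))
  | right _ => 0
  end.

Definition bounded_below (E : R -> Prop) : Prop :=
  exists m, forall x, E x -> m <= x.

Definition Inf (E : R -> Prop) : R :=
  match excluded_middle_informative (bounded_below E /\ exists x, E x) with
  | left _ => - Sup (fun x => E (- x))
  | right _ => 1
  end.

(* A countable continuous signature: function and relation symbols with
   arities and moduli of uniform continuity.  The distance symbol d is
   built in (constructor FDist below). *)
Record Sig : Type := {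
  fsym : Type;
  rsym : Type;
  farity : fsym -> nat;
  rarity : rsym -> nat;
  fmod : fsym -> R -> R;
  rmod : rsym -> R -> R;
  fmod_pos : forall f e, 0 < e -> 0 < fmod f e;
  rmod_pos : forall P e, 0 < e -> 0 < rmod P e;
  fsym_countable : exists g : fsym -> nat, forall x y, g x = g y -> x = y;
  rsym_countable : exists g : rsym -> nat, forall x y, g x = g y -> x = y
}.

Section Syntax.
Variable L : Sig.

(* Terms of L(C): variables x_n, new constants c_n (n : nat, C = {c_i}),
   and applications of function symbols. *)
Inductive term : Type :=
| Var : nat -> term
| Cst : nat -> term
| App : forall f : fsym L, (Fin.t (farity L f) -> term) -> term.

(* Formulas of L_{omega_1,omega}(C).  Variables are named (nat);
   FInf x phi binds x.  FConj Phi is the countable conjunction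
   (infimum) of the countable family {Phi n : n}. *)
Inductive formula : Type :=
| FDist : term -> term -> formula
| FRel : forall P : rsym L, (Fin.t (rarity L P) -> term) -> formula
| FNeg : formula -> formula
| FHalf : formula -> formula
| FPlus : formula -> formula -> formula
| FConj : (nat -> formula) -> formula
| FInf : nat -> formula -> formula.

Definition atomic (phi : formula) : Prop :=
  match phi with FDist _ _ | FRel _ _ => True | _ => False end.

Definition imm_sub (psi phi : formula) : Prop :=
  match phi with
  | FNeg a | FHalf a => psi = a
  | FPlus a b => psi = a \/ psi = b
  | FConj Phi => exists n, psi = Phi n
  | FInf _ a => psi = a
  | _ => False
  end.

Fixpoint term_var (x : nat) (t : term) : Prop :=
  match t with
  | Var y => x = y
  | Cst _ => False
  | App _ ts => exists i, term_var x (ts i)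
  end.

Fixpoint term_cst (c : nat) (t : term) : Prop :=
  match t with
  | Var _ => False
  | Cst d => c = d
  | App _ ts => exists i, term_cst c (ts i)
  end.

Fixpoint free (x : nat) (phi : formula) : Prop :=
  match phi with
  | FDist t1 t2 => term_var x t1 \/ term_var x t2
  | FRel _ ts => exists i, term_var x (ts i)
  | FNeg a | FHalf a => free x a
  | FPlus a b => free x a \/ free x b
  | FConj Phi => exists n, free x (Phi n)
  | FInf y a => x <> y /\ free x a
  end.

Fixpoint occ_cst (c : nat) (phi : formula) : Prop :=
  match phi with
  | FDist t1 t2 => term_cst c t1 \/ term_cst c t2
  | FRel _ ts => exists i, term_cst c (ts i)
  | FNeg a | FHalf a => occ_cst c a
  | FPlus a b => occ_cst c a \/ occ_cst c b
  | FConj Phi => exists n, occ_cst c (Phi n)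
  | FInf _ a => occ_cst c a
  end.

Fixpoint bound_in (y : nat) (phi : formula) : Prop :=
  match phi with
  | FDist _ _ | FRel _ _ => False
  | FNeg a | FHalf a => bound_in y a
  | FPlus a b => bound_in y a \/ bound_in y b
  | FConj Phi => exists n, bound_in y (Phi n)
  | FInf z a => y = z \/ bound_in y a
  end.

Definition sentence (phi : formula) : Prop := forall x, ~ free x phi.

Definition fin_free (phi : formula) : Prop :=
  exists l : list nat, forall x, free x phi -> In x l.

(* phi is a formula of L_{omega_1,omega}: no constant of C occurs, and
   every subformula has only finitely many free variables. *)
Fixpoint hered_fin_free (phi : formula) : Prop :=
  fin_free phi /\
  match phi with
  | FDist _ _ | FRel _ _ => True
  | FNeg a | FHalf a => hered_fin_free a
  | FPlus a b => hered_fin_free a /\ hered_fin_free b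
  | FConj Phi => forall n, hered_fin_free (Phi n)
  | FInf _ a => hered_fin_free a
  end.

Definition Lformula (phi : formula) : Prop :=
  (forall c, ~ occ_cst c phi) /\ hered_fin_free phi.

Definition Lterm (t : term) : Prop := forall c, ~ term_cst c t.

Fixpoint tsubst_t (x : nat) (s : term) (t : term) : term :=
  match t with
  | Var y => if Nat.eq_dec x y then s else Var y
  | Cst c => Cst c
  | App f ts => App f (fun i => tsubst_t x s (ts i))
  end.

Fixpoint tsubst (x : nat) (s : term) (phi : formula) : formula :=
  match phi with
  | FDist t1 t2 => FDist (tsubst_t x s t1) (tsubst_t x s t2)
  | FRel P ts => FRel P (fun i => tsubst_t x s (ts i))
  | FNeg a => FNeg (tsubst x s a)
  | FHalf a => FHalf (tsubst x s a)
  | FPlus a b => FPlus (tsubst x s a) (tsubst x s b)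
  | FConj Phi => FConj (fun n => tsubst x s (Phi n))
  | FInf y a => if Nat.eq_dec x y then FInf y a else FInf y (tsubst x s a)
  end.

Definition countable_fragment (A : formula -> Prop) : Prop :=
  (exists e : nat -> option formula,
      forall phi, A phi -> exists n, e n = Some phi) /\
  (forall phi, A phi -> Lformula phi) /\
  (forall phi, atomic phi -> Lformula phi -> A phi) /\
  (forall phi psi, A phi -> imm_sub psi phi -> A psi) /\
  (forall phi, A phi -> A (FNeg phi)) /\
  (forall phi, A phi -> A (FHalf phi)) /\
  (forall phi psi, A phi -> A psi -> A (FPlus phi psi)) /\
  (forall x phi, A phi -> A (FInf x phi)) /\
  (forall x t phi, A phi -> Lterm t ->
      (forall y, term_var y t -> ~ bound_in y phi) -> A (tsubst x t phi)).

(* Partial substitution of constants of C for variables: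
   rho x = Some c replaces free occurrences of x by c. *)
Definition csub := nat -> option nat.

Definition csub_none : csub := fun _ => None.

Definition csub_upd (rho : csub) (x : nat) (v : option nat) : csub :=
  fun y => if Nat.eq_dec x y then v else rho y.

Fixpoint csubst_t (rho : csub) (t : term) : term :=
  match t with
  | Var y => match rho y with Some c => Cst c | None => Var y end
  | Cst c => Cst c
  | App f ts => App f (fun i => csubst_t rho (ts i))
  end.

Fixpoint csubst (rho : csub) (phi : formula) : formula :=
  match phi with
  | FDist t1 t2 => FDist (csubst_t rho t1) (csubst_t rho t2)
  | FRel P ts => FRel P (fun i => csubst_t rho (ts i))
  | FNeg a => FNeg (csubst rho a)
  | FHalf a => FHalf (csubst rho a)
  | FPlus a b => FPlus (csubst rho a) (csubst rho b)
  | FConj Phi => FConj (fun n => csubst rho (Phi n))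
  | FInf y a => FInf y (csubst (csub_upd rho y None) a)
  end.

Definition inst (x c : nat) (phi : formula) : formula :=
  csubst (csub_upd csub_none x (Some c)) phi.

Definition fin_dom (rho : csub) : Prop :=
  exists l : list nat, forall x, rho x <> None -> In x l.

Definition SigmaC (Sigma : formula -> Prop) (psi : formula) : Prop :=
  exists phi rho, Sigma phi /\ fin_dom rho /\ psi = csubst rho phi.

End Syntax.

Arguments Var {L}.
Arguments Cst {L}.

Record Struc (L : Sig) : Type := {
  carrier :> Type;
  point : carrier;
  dist : carrier -> carrier -> R;
  fint : forall f : fsym L, (Fin.t (farity L f) -> carrier) -> carrier;
  rint : forall P : rsym L, (Fin.t (rarity L P) -> carrier) -> R;
  dist_range : forall x y, 0 <= dist x y <= 1;
  dist_eq : forall x y, dist x y = 0 <-> x = y;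
  dist_sym : forall x y, dist x y = dist y x;
  dist_tri : forall x y z, dist x z <= dist x y + dist y z;
  complete : forall u : nat -> carrier,
      (forall e, 0 < e -> exists N, forall n m, (N <= n)%nat -> (N <= m)%nat ->
          dist (u n) (u m) < e) ->
      exists l, forall e, 0 < e -> exists N, forall n, (N <= n)%nat ->
          dist (u n) l < e;
  fint_unif : forall f e, 0 < e -> forall xs ys,
      (forall i, dist (xs i) (ys i) < fmod L f e) ->
      dist (fint f xs) (fint f ys) <= e;
  rint_range : forall P xs, 0 <= rint P xs <= 1;
  rint_unif : forall P e, 0 < e -> forall xs ys,
      (forall i, dist (xs i) (ys i) < rmod L P e) ->
      Rabs (rint P xs - rint P ys) <= e
}.

Section Semantics.
Variable L : Sig.
Variable M : Struc L.

Fixpoint teval (a : nat -> M) (env : nat -> M) (t : term L) : M :=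
  match t with
  | Var x => env x
  | Cst c => a c
  | App f ts => fint M f (fun i => teval a env (ts i))
  end.

Definition env_upd (env : nat -> M) (x : nat) (m : M) : nat -> M :=
  fun y => if Nat.eq_dec x y then m else env y.

Fixpoint feval (a : nat -> M) (env : nat -> M) (phi : formula L) : R :=
  match phi with
  | FDist t1 t2 => dist M (teval a env t1) (teval a env t2)
  | FRel P ts => rint M P (fun i => teval a env (ts i))
  | FNeg b => 1 - feval a env b
  | FHalf b => / 2 * feval a env b
  | FPlus b c => Rmin (feval a env b + feval a env c) 1
  | FConj Phi => Inf (fun v => exists n, v = feval a env (Phi n))
  | FInf x b => Inf (fun v => exists m : M, v = feval a (env_upd env x m) b)
  end.

End Semantics.

(* An element (M, a_c)_{c in C0} of M(C): M in the class, C0 a finite set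
   of new constants, a_c their interpretations (only a on C0 matters). *)
Record StrucC (L : Sig) : Type := {
  base : Struc L;
  C0 : list nat;
  cint : nat -> base
}.

(* value of a sentence phi in (M, a_c)_{c in C0}, defined when all
   constants of phi lie in C0 *)
Definition sval (L : Sig) (N : StrucC L) (phi : formula L) : R :=
  @feval L (base N) (cint N) (fun _ => point (base N)) phi.

Definition interprets (L : Sig) (N : StrucC L) (phi : formula L) : Prop :=
  forall c, occ_cst c phi -> In c (C0 N).

Section Forcing.
Variable L : Sig.
Variable Mcls : Struc L -> Prop.
Variable Sigma : formula L -> Prop.

(* a (finite) set {phi_1 < r_1, ..., phi_n < r_n} *)
Definition cond := list (formula L * R).

Definition is_condition (p : cond) : Prop :=
  (forall phi r, In (phi, r) p -> SigmaC Sigma phi /\ sentence phi) /\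
  exists N : StrucC L, Mcls (base N) /\
    forall phi r, In (phi, r) p -> interprets N phi /\ sval N phi < r.

Definition cle (p q : cond) : Prop := forall x, In x q -> In x p.

(* H_p(phi) = min{r <= 1 : (phi < r) in p}, or 1; f_p is its
   restriction to atomic sentences *)
Definition Hval (p : cond) (phi : formula L) : R :=
  Inf (fun r => r <= 1 /\ In (phi, r) p).

Definition fval (p : cond) (phi : formula L) : R := Hval p phi.

(* Fenv phi rho p is F_p(phi[rho]), where rho is a
   partial assignment of constants to variables; this is only a device
   making the recursion structural (the clause for inf_x calls F on the
   substitution instance phi(c)). *)
Fixpoint Fenv (phi : formula L) (rho : csub) (p : cond) : R :=
  match phi with
  | FDist _ _ | FRel _ _ => fval p (csubst rho phi)
  | FNeg b => 1 - Inf (fun v => exists q, is_condition q /\ cle q p /\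
                                   v = Fenv b rho q)
  | FHalf b => / 2 * Fenv b rho p
  | FPlus b c => Rmin (Fenv b rho p + Fenv c rho p) 1
  | FConj Phi => Inf (fun v => exists n, v = Fenv (Phi n) rho p)
  | FInf x b => Inf (fun v => exists c : nat,
                       v = Fenv b (csub_upd rho x (Some c)) p)
  end.

Definition Fval (p : cond) (sigma : formula L) : R := Fenv sigma csub_none p.

Definition Fw (p : cond) (phi : formula L) : R :=
  Sup (fun v => exists q, is_condition q /\ cle q p /\
        v = Inf (fun w => exists q', is_condition q' /\ cle q' q /\
                   w = Fval q' phi)).

Definition Hw (p : cond) (phi : formula L) : R :=
  Sup (fun v => exists q, is_condition q /\ cle q p /\
        v = Inf (fun w => exists q', is_condition q' /\ cle q' q /\
                   w = Hval q' phi)).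

End Forcing.

(* Main.v *)
Require Import Defs.
From Stdlib Require Import Reals Lra Lia List Classical ClassicalEpsilon FunctionalExtensionality PropExtensionality.
Open Scope R_scope.

Lemma Sup_spec (E : R -> Prop) : bound E -> (exists x, E x) -> is_lub E (Sup E).
Proof.
  intros hb hne. unfold Sup.
  destruct (excluded_middle_informative _) as [h|h].
  - destruct (completeness E _ _) as [l hl]. simpl. exact hl.
  - exfalso; tauto.
Qed.

Lemma Inf_lb (E : R -> Prop) x : bounded_below E -> E x -> Inf E <= x.
Proof.
  intros [m hm] hx. unfold Inf.
  destruct (excluded_middle_informative _) as [h|h].
  - assert (hb : bound (fun y => E (- y))).
    { exists (-m). intros y hy. specialize (hm _ hy). lra. }
    assert (hne : exists y, E (- y)) by (exists (-x); rewrite Ropp_involutive; auto).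
    destruct (Sup_spec _ hb hne) as [h1 h2].
    assert (-x <= Sup (fun y => E (- y))) by (apply h1; rewrite Ropp_involutive; auto).
    lra.
  - exfalso. apply h. split; [exists m; auto | exists x; auto].
Qed.

Lemma Inf_glb (E : R -> Prop) m : (exists x, E x) -> (forall x, E x -> m <= x) -> m <= Inf E.
Proof.
  intros hne hm. unfold Inf.
  destruct (excluded_middle_informative _) as [h|h].
  - assert (hb : bound (fun y => E (- y))).
    { exists (-m). intros y hy. specialize (hm _ hy). lra. }
    destruct hne as [x hx].
    assert (hne : exists y, E (- y)) by (exists (-x); rewrite Ropp_involutive; auto).
    destruct (Sup_spec _ hb hne) as [h1 h2].
    assert (Sup (fun y => E (- y)) <= - m).
    { apply h2. intros y hy. specialize (hm _ hy). lra. }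
    lra.
  - exfalso. apply h. split; [exists m; auto | auto].
Qed.

Lemma Inf_empty (E : R -> Prop) : ~ (exists x, E x) -> Inf E = 1.
Proof.
  intros h. unfold Inf. destruct (excluded_middle_informative _) as [h'|h']; tauto.
Qed.

Lemma le_eps (x y : R) : (forall e, 0 < e -> x <= y + e) -> x <= y.
Proof.
  intros h. destruct (Rle_or_lt x y); auto.
  specialize (h ((x - y)/2) ltac:(lra)). lra.
Qed.

Lemma Inf_approx (E : R -> Prop) e : bounded_below E -> (exists x, E x) -> 0 < e ->
  exists x, E x /\ x < Inf E + e.
Proof.
  intros hb hne he. apply NNPP. intros hn.
  assert (Inf E + e <= Inf E).
  { apply Inf_glb; auto. intros x hx.
    destruct (Rle_or_lt (Inf E + e) x); auto. exfalso; apply hn; exists x; auto. }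
  lra.
Qed.

Lemma Inf_01 (E : R -> Prop) : (exists x, E x) -> (forall x, E x -> 0 <= x <= 1) ->
  0 <= Inf E <= 1.
Proof.
  intros hne h. split.
  - apply Inf_glb; auto. intros x hx; apply h; auto.
  - destruct hne as [x hx]. apply Rle_trans with x.
    + apply Inf_lb; auto. exists 0. intros y hy; apply h; auto.
    + apply h; auto.
Qed.

Lemma bb0 (E : R -> Prop) : (forall x, E x -> 0 <= x) -> bounded_below E.
Proof. intros h. exists 0. auto. Qed.
Section Syn.
Variable L : Sig.

Definition comb (s1 s2 : csub) : csub := fun y => match s1 y with Some c => Some c | None => s2 y end.

Lemma csubst_t_none (t : term L) : csubst_t csub_none t = t.
Proof.
  induction t as [n|n|f ts IH]; simpl; auto.
  f_equal. apply functional_extensionality; auto.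
Qed.

Lemma upd_none_none y : csub_upd csub_none y None = csub_none.
Proof. apply functional_extensionality; intro z; unfold csub_upd, csub_none; destruct Nat.eq_dec; auto. Qed.

Lemma csubst_none (phi : formula L) : csubst csub_none phi = phi.
Proof.
  induction phi; simpl; try rewrite !csubst_t_none; try congruence.
  - f_equal. apply functional_extensionality; intro; apply csubst_t_none.
  - f_equal. apply functional_extensionality; auto.
  - rewrite upd_none_none. congruence.
Qed.

Lemma csubst_t_comp s1 s2 (t : term L) : csubst_t s2 (csubst_t s1 t) = csubst_t (comb s1 s2) t.
Proof.
  induction t as [n|n|f ts IH]; simpl; auto.
  - unfold comb. destruct (s1 n); simpl; auto.
  - f_equal. apply functional_extensionality; auto.
Qed.

Lemma comb_upd s1 s2 y : comb (csub_upd s1 y None) (csub_upd s2 y None) = csub_upd (comb s1 s2) y None.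
Proof. apply functional_extensionality; intro z; unfold comb, csub_upd; destruct Nat.eq_dec; auto. Qed.

Lemma csubst_comp (phi : formula L) : forall s1 s2, csubst s2 (csubst s1 phi) = csubst (comb s1 s2) phi.
Proof.
  induction phi; intros s1 s2; simpl; try rewrite !csubst_t_comp; try congruence.
  - f_equal. apply functional_extensionality; intro; apply csubst_t_comp.
  - f_equal. apply functional_extensionality; auto.
  - rewrite IHphi, comb_upd. auto.
Qed.

Lemma tvar_csubst rho y (t : term L) : term_var y (csubst_t rho t) <-> term_var y t /\ rho y = None.
Proof.
  induction t as [n|n|f ts IH]; simpl.
  - destruct (rho n) eqn:E; simpl.
    + split; [tauto|]. intros [h1 h2]; subst; congruence.
    + split; [intros h; subst; auto|tauto].
  - tauto.
  - split.
    + intros [i hi]. apply IH in hi. destruct hi. split; eauto.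
    + intros [[i hi] hr]. exists i. apply IH; auto.
Qed.

Lemma free_csubst (phi : formula L) : forall rho y, free y (csubst rho phi) <-> free y phi /\ rho y = None.
Proof.
  induction phi; intros rho y; simpl.
  - rewrite !tvar_csubst. tauto.
  - split.
    + intros [i hi]. apply tvar_csubst in hi. destruct hi. split; eauto.
    + intros [[i hi] hr]. exists i. apply tvar_csubst; auto.
  - auto.
  - auto.
  - rewrite IHphi1, IHphi2. tauto.
  - split.
    + intros [n hn]. apply H in hn. destruct hn. split; eauto.
    + intros [[n hn] hr]. exists n. apply H; auto.
  - rewrite IHphi. unfold csub_upd. destruct Nat.eq_dec; subst; split; try tauto.
Qed.

Lemma tcst_csubst rho c (t : term L) : term_cst c (csubst_t rho t) -> term_cst c t \/ exists y, rho y = Some c.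
Proof.
  induction t as [n|n|f ts IH]; simpl.
  - destruct (rho n) eqn:E; simpl; intros h; try tauto. subst; eauto.
  - auto.
  - intros [i hi]. destruct (IH i hi); eauto.
Qed.

Lemma occ_csubst (phi : formula L) : forall rho c, occ_cst c (csubst rho phi) -> occ_cst c phi \/ exists y, rho y = Some c.
Proof.
  induction phi; intros rho c; simpl.
  - intros [h|h]; apply tcst_csubst in h; tauto.
  - intros [i hi]. destruct (tcst_csubst _ _ _ hi); eauto.
  - auto.
  - auto.
  - intros [h|h]; [destruct (IHphi1 _ _ h)|destruct (IHphi2 _ _ h)]; tauto.
  - intros [n hn]. destruct (H _ _ _ hn); eauto.
  - intros h. destruct (IHphi _ _ h) as [h'|[y hy]]; auto.
    right. exists y. unfold csub_upd in hy. destruct Nat.eq_dec; congruence.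
Qed.

Lemma tcst_csubst_rev rho c (t : term L) : term_cst c t -> term_cst c (csubst_t rho t).
Proof.
  induction t as [n|n|f ts IH]; simpl; auto; try tauto.
  intros [i hi]; eauto.
Qed.

Lemma occ_csubst_rev (phi : formula L) : forall rho c, occ_cst c phi -> occ_cst c (csubst rho phi).
Proof.
  induction phi; intros rho c; simpl.
  - intros [h|h]; [left|right]; apply tcst_csubst_rev; auto.
  - intros [i hi]; exists i; apply tcst_csubst_rev; auto.
  - auto.
  - auto.
  - intros [h|h]; auto.
  - intros [n hn]; eauto.
  - auto.
Qed.

Section Sem.
Variable M : Struc L.

Definition aupd (a : nat -> M) c m : nat -> M := fun d => if Nat.eq_dec c d then m else a d.

Definition renv (a env : nat -> M) (rho : csub) : nat -> M :=
  fun y => match rho y with Some c => a c | None => env y end.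

Lemma teval_csubst (a env : nat -> M) rho (t : term L) : teval M a env (csubst_t rho t) = teval M a (renv a env rho) t.
Proof.
  induction t as [n|n|f ts IH]; simpl; auto.
  - unfold renv. destruct (rho n); simpl; auto.
  - f_equal. apply functional_extensionality; auto.
Qed.

Lemma renv_upd (a env : nat -> M) rho x m : renv a (env_upd M env x m) (csub_upd rho x None) = env_upd M (renv a env rho) x m.
Proof. apply functional_extensionality; intro z; unfold renv, env_upd, csub_upd; destruct Nat.eq_dec; auto. Qed.

Lemma feval_csubst (phi : formula L) : forall (a env : nat -> M) rho, feval M a env (csubst rho phi) = feval M a (renv a env rho) phi.
Proof.
  induction phi; intros a env rho; simpl; try rewrite !teval_csubst; auto.
  - f_equal. apply functional_extensionality; intro; apply teval_csubst.
  - rewrite IHphi; auto.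
  - rewrite IHphi; auto.
  - rewrite IHphi1, IHphi2; auto.
  - f_equal. apply functional_extensionality; intro v. apply propositional_extensionality.
    split; intros [n hn]; exists n; rewrite hn; auto.
  - f_equal. apply functional_extensionality; intro v. apply propositional_extensionality.
    split; intros [m hm]; exists m; rewrite hm, IHphi, renv_upd; auto.
Qed.

Lemma teval_cst (a env : nat -> M) c m (t : term L) : ~ term_cst c t -> teval M (aupd a c m) env t = teval M a env t.
Proof.
  induction t as [n|n|f ts IH]; simpl; intros h; auto.
  - unfold aupd; destruct Nat.eq_dec; tauto.
  - f_equal. apply functional_extensionality; intro i. apply IH. intro; apply h; eauto.
Qed.

Lemma feval_cst (phi : formula L) : forall (a env : nat -> M) c m, ~ occ_cst c phi -> feval M (aupd a c m) env phi = feval M a env phi.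
Proof.
  induction phi; intros a env c m h; simpl in *.
  - rewrite !teval_cst; auto.
  - f_equal. apply functional_extensionality; intro i. apply teval_cst. intro; apply h; eauto.
  - rewrite IHphi; auto.
  - rewrite IHphi; auto.
  - rewrite IHphi1, IHphi2; auto.
  - f_equal. apply functional_extensionality; intro v. apply propositional_extensionality.
    split; intros [n hn]; exists n; rewrite hn; [|symmetry]; apply H; intro; apply h; eauto.
  - f_equal. apply functional_extensionality; intro v. apply propositional_extensionality.
    split; intros [k hk]; exists k; rewrite hk; [|symmetry]; apply IHphi; auto.
Qed.

Lemma feval_range (phi : formula L) : forall (a env : nat -> M), 0 <= feval M a env phi <= 1.
Proof.
  induction phi; intros a env; simpl.
  - apply dist_range.
  - apply rint_range.
  - specialize (IHphi a env); lra.
  - specialize (IHphi a env); lra.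
  - specialize (IHphi1 a env); specialize (IHphi2 a env).
    unfold Rmin; destruct Rle_dec; lra.
  - apply Inf_01. exists (feval M a env (f 0%nat)); eauto.
    intros x [n ->]; auto.
  - apply Inf_01. exists (feval M a (env_upd M env n (point M)) phi); eauto.
    intros x [m ->]; auto.
Qed.

End Sem.
End Syn.
Section Forc.
Variable L : Sig.
Variable Mcls : Struc L -> Prop.
Variable Sigma : formula L -> Prop.

Definition Models (q : cond L) (N : StrucC L) : Prop :=
  Mcls (base N) /\ forall phi r, In (phi, r) q -> interprets N phi /\ sval N phi < r.

Notation isc := (is_condition Mcls Sigma).
Notation F := (Fenv Mcls Sigma).

Lemma cond_model q : isc q -> exists N, Models q N.
Proof. intros [_ h]; exact h. Qed.

Lemma cle_refl (q : cond L) : cle q q.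
Proof. intros x; auto. Qed.

Lemma cle_trans (a b c : cond L) : cle a b -> cle b c -> cle a c.
Proof. unfold cle; auto. Qed.

Lemma Models_cle q q' N : cle q' q -> Models q' N -> Models q N.
Proof. intros hc [h1 h2]. split; auto. Qed.

Lemma sval_range (N : StrucC L) phi : 0 <= sval N phi <= 1.
Proof. apply feval_range. Qed.

Lemma Hval_ge q N phi : Models q N -> sval N phi <= Hval q phi.
Proof.
  intros [_ hN]. unfold Hval.
  destruct (classic (exists x, x <= 1 /\ In (phi, x) q)) as [h|h].
  - apply Inf_glb; auto. intros x [_ hx]. apply Rlt_le. apply hN; auto.
  - rewrite Inf_empty; auto. apply sval_range.
Qed.

Lemma Hval_range q phi : isc q -> 0 <= Hval q phi <= 1.
Proof.
  intros hq. destruct (cond_model _ hq) as [N [_ hN]]. unfold Hval.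
  destruct (classic (exists x, x <= 1 /\ In (phi, x) q)) as [h|h].
  - apply Inf_01; auto. intros x [h1 h2]. destruct (hN _ _ h2) as [_ h3].
    pose proof (sval_range N phi). lra.
  - rewrite Inf_empty; auto. lra.
Qed.

Lemma Hval_entry q phi r : isc q -> In (phi, r) q -> r <= 1 -> Hval q phi <= r.
Proof.
  intros hq hin hr. destruct (cond_model _ hq) as [N [_ hN]]. unfold Hval.
  apply Inf_lb; auto. apply bb0. intros x [h1 h2]. destruct (hN _ _ h2) as [_ h3].
  pose proof (sval_range N phi). lra.
Qed.

Lemma Hval_entry' q phi r : isc q -> In (phi, r) q -> Hval q phi <= r \/ 1 < r.
Proof.
  intros hq hin. destruct (Rle_or_lt r 1); [left; apply Hval_entry; auto| right; auto].
Qed.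

Lemma Fenv_range phi : forall rho q, isc q -> 0 <= F phi rho q <= 1.
Proof.
  induction phi; intros rho q hq; simpl.
  - apply Hval_range; auto.
  - apply Hval_range; auto.
  - assert (0 <= Inf (fun v => exists q0, isc q0 /\ cle q0 q /\ v = F phi rho q0) <= 1).
    { apply Inf_01. exists (F phi rho q); exists q; exact (conj hq (conj (cle_refl _) eq_refl)).
      intros x [q0 [h1 [h2 ->]]]; auto. }
    lra.
  - specialize (IHphi rho q hq); lra.
  - specialize (IHphi1 rho q hq); specialize (IHphi2 rho q hq).
    unfold Rmin; destruct Rle_dec; lra.
  - apply Inf_01. exists (F (f 0%nat) rho q); eauto. intros x [n ->]; auto.
  - apply Inf_01. exists (F phi (csub_upd rho n (Some 0%nat)) q); eauto. intros x [m ->]; auto.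
Qed.

Lemma Fenv_anti phi : forall rho q q', isc q -> isc q' -> cle q' q -> F phi rho q' <= F phi rho q.
Proof.
  assert (HH : forall psi q q', isc q -> isc q' -> cle q' q -> Hval q' psi <= Hval q psi).
  { intros psi q q' hq hq' hc. unfold Hval at 2.
    destruct (classic (exists x, x <= 1 /\ In (psi, x) q)) as [h|h].
    - apply Inf_glb; auto. intros x [h1 h2]. apply Hval_entry; auto.
    - rewrite Inf_empty; auto. apply Hval_range; auto. }
  induction phi; intros rho q q' hq hq' hc; simpl.
  - apply HH; auto.
  - apply HH; auto.
  - assert (Inf (fun v => exists q0, isc q0 /\ cle q0 q /\ v = F phi rho q0) <=
            Inf (fun v => exists q0, isc q0 /\ cle q0 q' /\ v = F phi rho q0)).
    { apply Inf_glb. exists (F phi rho q'); exists q'; exact (conj hq' (conj (cle_refl _) eq_refl)).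
      intros x [q0 [h1 [h2 ->]]]. apply Inf_lb.
      - apply bb0. intros y [q1 [h3 [h4 ->]]]. apply Fenv_range; auto.
      - exists q0; split; [auto|split; [eapply cle_trans; eauto|reflexivity]]. }
    lra.
  - specialize (IHphi rho q q' hq hq' hc); lra.
  - specialize (IHphi1 rho q q' hq hq' hc); specialize (IHphi2 rho q q' hq hq' hc).
    unfold Rmin; repeat destruct Rle_dec; lra.
  - apply Inf_glb. exists (F (f 0%nat) rho q); eauto. intros x [n ->].
    apply Rle_trans with (F (f n) rho q'); auto. apply Inf_lb; eauto.
    apply bb0. intros y [k ->]. apply Fenv_range; auto.
  - apply Inf_glb. exists (F phi (csub_upd rho n (Some 0%nat)) q); eauto. intros x [m ->].
    apply Rle_trans with (F phi (csub_upd rho n (Some m)) q'); auto. apply Inf_lb; eauto.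
    apply bb0. intros y [k ->]. apply Fenv_range; auto.
Qed.


Hypothesis hNoC : forall phi, Sigma phi -> forall c, ~ occ_cst c phi.
Hypothesis hSub : forall phi psi, Sigma phi -> imm_sub psi phi -> Sigma psi.

Lemma list_bound (rho : csub) (l : list nat) :
  exists B, forall y, In y l -> forall c, rho y = Some c -> (c < B)%nat.
Proof.
  induction l as [|y l [B hB]].
  - exists 0%nat. intros y [].
  - destruct (rho y) as [c|] eqn:E.
    + exists (Nat.max B (S c)). intros z [<-|hz] d hd.
      * rewrite E in hd; injection hd as <-. lia.
      * specialize (hB _ hz _ hd). lia.
    + exists B. intros z [<-|hz] d hd; [congruence|eauto].
Qed.

Lemma sigmaC_bound psi : SigmaC Sigma psi -> exists B, forall c, occ_cst c psi -> (c < B)%nat.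
Proof.
  intros [phi [rho [hs [[l hl] ->]]]].
  destruct (list_bound rho l) as [B hB]. exists B. intros c hc.
  destruct (occ_csubst _ _ _ _ hc) as [h|[y hy]].
  - exfalso; eapply hNoC; eauto.
  - apply (hB y); auto. apply hl. congruence.
Qed.

Lemma cond_bound (q : cond L) : (forall phi r, In (phi, r) q -> SigmaC Sigma phi) ->
  exists B, forall phi r c, In (phi, r) q -> occ_cst c phi -> (c < B)%nat.
Proof.
  induction q as [|[phi r] q IH]; intros h.
  - exists 0%nat. intros ? ? ? [].
  - destruct IH as [B hB]. { intros; eapply h; right; eauto. }
    destruct (sigmaC_bound phi) as [B' hB']. { eapply h; left; eauto. }
    exists (Nat.max B B'). intros psi s c [e|hin] hc.
    + injection e as -> ->. specialize (hB' _ hc). lia.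
    + specialize (hB _ _ _ hin hc). lia.
Qed.

Lemma add_entry q N psi r : isc q -> Models q N -> SigmaC Sigma psi -> sentence psi ->
  sval N psi < r -> exists N', isc ((psi, r) :: q) /\ Models ((psi, r) :: q) N' /\
    (forall phi, sval N' phi = sval N phi).
Proof.
  intros hq [hM hN] hs hse hr.
  destruct (sigmaC_bound psi hs) as [B hB].
  set (N' := Build_StrucC (base N) (seq 0 B ++ C0 N) (cint N)).
  assert (hm : Models ((psi, r) :: q) N').
  { split; [exact hM|]. intros phi s [e|hin].
    - injection e as -> ->. split; [|exact hr].
      intros c hc. simpl. apply in_or_app. left. apply in_seq. specialize (hB _ hc). lia.
    - destruct (hN _ _ hin) as [h1 h2]. split; [|exact h2].
      intros c hc. simpl. apply in_or_app. right. auto. }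
  exists N'. split; [|split; [exact hm|reflexivity]].
  split; [|exists N'; exact hm].
  intros phi s [e|hin].
  - injection e as -> ->. auto.
  - destruct hq as [h _]. eauto.
Qed.

Lemma fresh_model q N c (m : base N) (B : nat) :
  Models q N -> (forall phi r d, In (phi, r) q -> occ_cst d phi -> (d < B)%nat) -> (B <= c)%nat ->
  Models q (Build_StrucC (base N) (c :: C0 N) (@aupd L (base N) (cint N) c m)).
Proof.
  intros [hM hN] hB hc. split; [exact hM|]. intros phi r hin.
  destruct (hN _ _ hin) as [h1 h2]. split.
  - intros d hd. simpl. right. auto.
  - unfold sval; simpl. rewrite feval_cst. exact h2.
    intro h. specialize (hB _ _ _ hin h). lia.
Qed.

Lemma sc_inv_neg x : SigmaC Sigma (FNeg x) -> SigmaC Sigma x.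
Proof.
  intros [phi [rho [hs [hf e]]]]. destruct phi; simpl in e; try discriminate.
  injection e as ->. exists phi, rho. repeat split; auto. eapply hSub; eauto. simpl; auto.
Qed.

Lemma sc_inv_half x : SigmaC Sigma (FHalf x) -> SigmaC Sigma x.
Proof.
  intros [phi [rho [hs [hf e]]]]. destruct phi; simpl in e; try discriminate.
  injection e as ->. exists phi, rho. repeat split; auto. eapply hSub; eauto. simpl; auto.
Qed.

Lemma sc_inv_plus x y : SigmaC Sigma (FPlus x y) -> SigmaC Sigma x /\ SigmaC Sigma y.
Proof.
  intros [phi [rho [hs [hf e]]]]. destruct phi; simpl in e; try discriminate.
  injection e as -> ->. split.
  - exists phi1, rho. repeat split; auto. eapply hSub; eauto. simpl; auto.
  - exists phi2, rho. repeat split; auto. eapply hSub; eauto. simpl; auto.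
Qed.

Lemma sc_inv_conj f n : SigmaC Sigma (FConj f) -> SigmaC Sigma (f n).
Proof.
  intros [phi [rho [hs [hf e]]]]. destruct phi; simpl in e; try discriminate.
  injection e as e. rewrite e. exists (f0 n), rho. repeat split; auto. eapply hSub; eauto. simpl; eauto.
Qed.

Lemma inst_comp (b : formula L) rho x c :
  csubst (csub_upd csub_none x (Some c)) (csubst (csub_upd rho x None) b) = csubst (csub_upd rho x (Some c)) b.
Proof.
  rewrite csubst_comp. f_equal. apply functional_extensionality; intro z.
  unfold comb, csub_upd, csub_none. destruct Nat.eq_dec; auto. destruct (rho z); auto.
Qed.

Lemma sc_inv_inf rho x b c : SigmaC Sigma (csubst rho (FInf x b)) ->
  SigmaC Sigma (csubst (csub_upd rho x (Some c)) b).
Proof.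
  intros [phi [rho0 [hs [[l hl] e]]]]. destruct phi; simpl in e; try discriminate.
  injection e as ex e. subst n.
  exists phi, (csub_upd rho0 x (Some c)). repeat split.
  - eapply hSub; eauto. simpl; auto.
  - exists (x :: l). intros z hz. unfold csub_upd in hz. destruct Nat.eq_dec; [left; auto|right; auto].
  - rewrite <- (inst_comp b rho x c), <- (inst_comp phi rho0 x c), e. auto.
Qed.

Lemma sent_inf rho x (b : formula L) c : sentence (csubst rho (FInf x b)) ->
  sentence (csubst (csub_upd rho x (Some c)) b).
Proof.
  intros hs y hy. apply free_csubst in hy. destruct hy as [h1 h2].
  apply (hs y). simpl. unfold csub_upd in h2. destruct Nat.eq_dec; [discriminate|].
  split; auto. apply free_csubst. split; auto. unfold csub_upd. destruct Nat.eq_dec; [congruence|auto].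
Qed.

Lemma sval_inst (N : StrucC L) rho x (b : formula L) c :
  sval N (csubst (csub_upd rho x (Some c)) b) =
  feval (base N) (cint N) (env_upd (base N) (fun _ => point (base N)) x (cint N c)) (csubst (csub_upd rho x None) b).
Proof.
  unfold sval. rewrite <- inst_comp. rewrite feval_csubst. f_equal.
  apply functional_extensionality; intro z. unfold renv, env_upd, csub_upd, csub_none.
  destruct Nat.eq_dec; auto.
Qed.

Lemma H_down q N psi e : isc q -> Models q N -> SigmaC Sigma psi -> sentence psi -> 0 < e ->
  exists q', isc q' /\ cle q' q /\ Hval q' psi <= sval N psi + e.
Proof.
  intros hq hN hs hse he.
  destruct (add_entry q N psi (sval N psi + e) hq hN hs hse ltac:(lra)) as [N' [hq' [hN' _]]].
  exists ((psi, sval N psi + e) :: q). split; [auto|split].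
  - intros z hz; right; auto.
  - destruct (Hval_entry' _ psi (sval N psi + e) hq') as [h|h]; [left; auto|auto|].
    pose proof (Hval_range ((psi, sval N psi + e) :: q) psi hq'). lra.
Qed.

Definition UP phi rho := forall q N, isc q -> Models q N -> sval N (csubst rho phi) <= F phi rho q.
Definition DOWN phi rho := forall q N e, isc q -> Models q N -> 0 < e ->
  exists q', isc q' /\ cle q' q /\ F phi rho q' <= sval N (csubst rho phi) + e.

Lemma main phi : forall rho, SigmaC Sigma (csubst rho phi) -> sentence (csubst rho phi) ->
  UP phi rho /\ DOWN phi rho.
Proof.
  induction phi as [t1 t2|P ts|b IH|b IH|b IHb c IHc|f IH|x b IH]; intros rho hs hse.
  - split.
    + intros q N hq hN. apply Hval_ge; auto.
    + intros q N e hq hN he. apply H_down; auto.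
  - split.
    + intros q N hq hN. apply Hval_ge; auto.
    + intros q N e hq hN he. apply H_down; auto.
  -
    simpl in hs, hse.
    assert (hs' : SigmaC Sigma (csubst rho b)) by (apply sc_inv_neg; auto).
    assert (hse' : sentence (csubst rho b)) by (intros y hy; apply (hse y); exact hy).
    destruct (IH rho hs' hse') as [U D].
    assert (ev : forall N, sval N (csubst rho (FNeg b)) = 1 - sval N (csubst rho b)) by reflexivity.
    split.
    + intros q N hq hN. rewrite ev. simpl.
      assert (Inf (fun v => exists q0, isc q0 /\ cle q0 q /\ v = F b rho q0) <= sval N (csubst rho b)); [|lra].
      apply le_eps. intros e he. destruct (D q N e hq hN he) as [q' [h1 [h2 h3]]].
      apply Rle_trans with (F b rho q'); auto. apply Inf_lb.
      * apply bb0. intros y [q0 [h4 [h5 ->]]]. apply Fenv_range; auto.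
      * exists q'; auto.
    + intros q N e hq hN he.
      set (r := sval N (FNeg (csubst rho b)) + e).
      destruct (add_entry q N (FNeg (csubst rho b)) r hq hN hs hse ltac:(unfold r; lra)) as [N' [hq' [hN' _]]].
      exists ((FNeg (csubst rho b), r) :: q). split; [auto|split; [intros z hz; right; auto|]].
      rewrite ev. simpl.
      assert (sval N (csubst rho b) - e <= Inf (fun v => exists q0, isc q0 /\ cle q0 ((FNeg (csubst rho b), r) :: q) /\ v = F b rho q0)); [|lra].
      apply Inf_glb.
      * exists (F b rho ((FNeg (csubst rho b), r) :: q)). exists ((FNeg (csubst rho b), r) :: q).
        exact (conj hq' (conj (cle_refl _) eq_refl)).
      * intros y [q0 [h4 [h5 ->]]]. destruct (cond_model _ h4) as [N0 hN0].
        pose proof (U q0 N0 h4 hN0).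
        destruct hN0 as [_ hN0]. destruct (hN0 (FNeg (csubst rho b)) r) as [_ hr].
        { apply h5. left; auto. }
        unfold r in hr. change (1 - sval N0 (csubst rho b) < 1 - sval N (csubst rho b) + e) in hr. lra.
  -
    simpl in hs, hse.
    assert (hs' : SigmaC Sigma (csubst rho b)) by (apply sc_inv_half; auto).
    assert (hse' : sentence (csubst rho b)) by (intros y hy; apply (hse y); exact hy).
    destruct (IH rho hs' hse') as [U D].
    assert (ev : forall N, sval N (csubst rho (FHalf b)) = / 2 * sval N (csubst rho b)) by reflexivity.
    split.
    + intros q N hq hN. rewrite ev. simpl. specialize (U q N hq hN). lra.
    + intros q N e hq hN he. destruct (D q N e hq hN he) as [q' [h1 [h2 h3]]].
      exists q'. split; [auto|split; auto]. rewrite ev; simpl. lra.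
  -
    simpl in hs, hse.
    destruct (sc_inv_plus _ _ hs) as [hsb hsc].
    assert (hseb : sentence (csubst rho b)) by (intros y hy; apply (hse y); left; exact hy).
    assert (hsec : sentence (csubst rho c)) by (intros y hy; apply (hse y); right; exact hy).
    destruct (IHb rho hsb hseb) as [Ub Db]. destruct (IHc rho hsc hsec) as [Uc Dc].
    assert (ev : forall N, sval N (csubst rho (FPlus b c)) = Rmin (sval N (csubst rho b) + sval N (csubst rho c)) 1) by reflexivity.
    split.
    + intros q N hq hN. rewrite ev. simpl. specialize (Ub q N hq hN). specialize (Uc q N hq hN).
      unfold Rmin; repeat destruct Rle_dec; lra.
    + intros q N e hq hN he.
      set (r := sval N (csubst rho c) + e / 3).
      destruct (add_entry q N (csubst rho c) r hq hN hsc hsec ltac:(unfold r; lra)) as [N0 [hq0 [hN0 hsv]]].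
      destruct (Db _ N0 (e/3) hq0 hN0 ltac:(lra)) as [q1 [hq1 [hc1 hF1]]].
      destruct (cond_model _ hq1) as [N1 hN1].
      assert (hr1 : sval N1 (csubst rho c) < r).
      { destruct hN1 as [_ hN1]. apply (hN1 _ r). apply hc1. left; auto. }
      destruct (Dc _ N1 (e/3) hq1 hN1 ltac:(lra)) as [q2 [hq2 [hc2 hF2]]].
      pose proof (Fenv_anti b rho q1 q2 hq1 hq2 hc2).
      rewrite hsv in hF1.
      exists q2. split; [auto|split].
      * intros z hz. apply hc2, hc1. right; auto.
      * rewrite ev. simpl. unfold r in hr1. unfold Rmin; repeat destruct Rle_dec; lra.
  -
    simpl in hs, hse.
    assert (hs' : forall n, SigmaC Sigma (csubst rho (f n))) by (intros n; exact (sc_inv_conj _ n hs)).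
    assert (hse' : forall n, sentence (csubst rho (f n))) by (intros n y hy; apply (hse y); exists n; exact hy).
    assert (ev : forall N, sval N (csubst rho (FConj f)) = Inf (fun v => exists n, v = sval N (csubst rho (f n)))) by reflexivity.
    split.
    + intros q N hq hN. rewrite ev. simpl. apply Inf_glb.
      * exists (F (f 0%nat) rho q); eauto.
      * intros y [n ->]. apply Rle_trans with (sval N (csubst rho (f n))).
        -- apply Inf_lb; eauto. apply bb0. intros z [k ->]. apply sval_range.
        -- apply (proj1 (IH n rho (hs' n) (hse' n))); auto.
    + intros q N e hq hN he.
      destruct (Inf_approx (fun v => exists n, v = sval N (csubst rho (f n))) (e/2)) as [v [[n ->] hv]].
      { apply bb0. intros z [k ->]. apply sval_range. }
      { eauto. }
      { lra. }
      destruct (proj2 (IH n rho (hs' n) (hse' n)) q N (e/2) hq hN ltac:(lra)) as [q' [h1 [h2 h3]]].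
      exists q'. split; [auto|split; auto]. rewrite ev. simpl.
      apply Rle_trans with (F (f n) rho q').
      * apply Inf_lb; eauto. apply bb0. intros z [k ->]. apply Fenv_range; auto.
      * lra.
  -
    assert (hs' : forall c, SigmaC Sigma (csubst (csub_upd rho x (Some c)) b)) by (intros c; apply sc_inv_inf; auto).
    assert (hse' : forall c, sentence (csubst (csub_upd rho x (Some c)) b)) by (intros c; apply sent_inf; auto).
    set (beta := csubst (csub_upd rho x None) b).
    assert (ev : forall N, sval N (csubst rho (FInf x b)) =
      Inf (fun v => exists m, v = feval (base N) (cint N) (env_upd (base N) (fun _ => point (base N)) x m) beta)) by reflexivity.
    split.
    + intros q N hq hN. rewrite ev. simpl. apply Inf_glb.
      * exists (F b (csub_upd rho x (Some 0%nat)) q); eauto.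
      * intros y [c ->]. apply Rle_trans with (sval N (csubst (csub_upd rho x (Some c)) b)).
        -- rewrite sval_inst. apply Inf_lb; eauto. apply bb0. intros z [k ->]. apply feval_range.
        -- apply (proj1 (IH _ (hs' c) (hse' c))); auto.
    + intros q N e hq hN he.
      destruct (Inf_approx (fun v => exists m, v = feval (base N) (cint N) (env_upd (base N) (fun _ => point (base N)) x m) beta) (e/2)) as [v [[m ->] hv]].
      { apply bb0. intros z [k ->]. apply feval_range. }
      { exists (feval (base N) (cint N) (env_upd (base N) (fun _ => point (base N)) x (point (base N))) beta); eauto. }
      { lra. }
      destruct (cond_bound q) as [B1 hB1]. { intros phi r hin. destruct hq as [hq _]. eapply hq; eauto. }
      destruct (sigmaC_bound _ hs) as [B2 hB2].
      set (c := Nat.max B1 B2).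
      set (N' := Build_StrucC (base N) (c :: C0 N) (@aupd L (base N) (cint N) c m)).
      assert (hN' : Models q N') by (apply (fresh_model q N c m B1); auto; unfold c; lia).
      destruct (proj2 (IH _ (hs' c) (hse' c)) q N' (e/2) hq hN' ltac:(lra)) as [q' [h1 [h2 h3]]].
      exists q'. split; [auto|split; auto].
      assert (hv' : sval N' (csubst (csub_upd rho x (Some c)) b) =
                    feval (base N) (cint N) (env_upd (base N) (fun _ => point (base N)) x m) beta).
      { rewrite sval_inst. simpl. unfold aupd at 2. destruct Nat.eq_dec; [|congruence].
        fold beta. apply feval_cst. intro hc. specialize (hB2 c hc). unfold c in hB2. lia. }
      rewrite hv' in h3. rewrite ev.
      change (F (FInf x b) rho q') with (Inf (fun v => exists c0, v = F b (csub_upd rho x (Some c0)) q')).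
      apply Rle_trans with (F b (csub_upd rho x (Some c)) q').
      * apply Inf_lb; eauto. apply bb0. intros z [k ->]. apply Fenv_range; auto.
      * lra.
  Unshelve. all: exact 0%nat.
Qed.

Lemma inner_eq q sigma : isc q -> SigmaC Sigma sigma -> sentence sigma ->
  Inf (fun w => exists q', isc q' /\ cle q' q /\ w = Fval Mcls Sigma q' sigma) =
  Inf (fun w => exists q', isc q' /\ cle q' q /\ w = Hval q' sigma).
Proof.
  intros hq hs hse.
  destruct (main sigma csub_none) as [U D]; try rewrite csubst_none; auto.
  unfold UP, DOWN in U, D. rewrite csubst_none in U, D.
  apply Rle_antisym.
  - apply Inf_glb.
    + exists (Hval q sigma), q. exact (conj hq (conj (cle_refl _) eq_refl)).
    + intros y [q' [h1 [h2 ->]]]. apply le_eps. intros e he.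
      destruct (cond_model _ h1) as [N' hN'].
      destruct (D q' N' e h1 hN' he) as [q'' [h3 [h4 h5]]].
      pose proof (Hval_ge _ _ sigma hN').
      apply Rle_trans with (Fval Mcls Sigma q'' sigma).
      * apply Inf_lb.
        -- apply bb0. intros z [q0 [h6 [h7 ->]]]. apply Fenv_range; auto.
        -- exists q''. split; [auto|split; [eapply cle_trans; eauto|reflexivity]].
      * unfold Fval. lra.
  - apply Inf_glb.
    + exists (Fval Mcls Sigma q sigma), q. exact (conj hq (conj (cle_refl _) eq_refl)).
    + intros y [q' [h1 [h2 ->]]]. apply le_eps. intros e he.
      destruct (cond_model _ h1) as [N' hN'].
      destruct (H_down q' N' sigma e h1 hN' hs hse he) as [q'' [h3 [h4 h5]]].
      pose proof (U q' N' h1 hN').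
      apply Rle_trans with (Hval q'' sigma).
      * apply Inf_lb.
        -- apply bb0. intros z [q0 [h6 [h7 ->]]]. apply Hval_range; auto.
        -- exists q''. split; [auto|split; [eapply cle_trans; eauto|reflexivity]].
      * unfold Fval. lra.
Qed.

End Forc.

Theorem proposition3p4 :
  forall (L : Sig) (Mcls : Struc L -> Prop)
         (A : formula L -> Prop) (Sigma : formula L -> Prop),
    countable_fragment A ->
    (forall phi, Sigma phi -> A phi) ->
    (forall phi, atomic phi -> Lformula phi -> Sigma phi) ->
    (forall phi psi, Sigma phi -> imm_sub psi phi -> Sigma psi) ->
    forall (p : cond L) (sigma : formula L),
      is_condition Mcls Sigma p ->
      SigmaC Sigma sigma -> sentence sigma ->
      Fw Mcls Sigma p sigma = Hw Mcls Sigma p sigma.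
Proof.
  intros L Mcls A Sigma hA hSA hAt hSub p sigma hp hs hse.
  assert (hNoC : forall phi, Sigma phi -> forall c, ~ occ_cst c phi).
  { intros phi hphi c. destruct hA as [_ [hL _]]. exact (proj1 (hL phi (hSA phi hphi)) c). }
  unfold Fw, Hw. f_equal. apply functional_extensionality; intro v.
  apply propositional_extensionality.
  split; intros [q [hq [hc ->]]]; exists q; split; auto; split; auto.
  - apply inner_eq; auto.
  - symmetry; apply inner_eq; auto.
Qed.
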